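(* Let $F$ be a finite field of odd characteristic in which $-1$ is not a square, let $z,z'\in F$ with $z\neq z'$, and let $g_z,g_{z'}:F^3\to\mathbb{C}$ be functions supported on the planes $\{x_3=z\}$ and $\{x_3=z'\}$ respectively, each $\sim 1$ on its support. Let $G_z=\{\underline{x}\in F^2:g_z(\underline{x},z)\ne0\}$ and $G_{z'}=\{\underline{x}\in F^2:g_{z'}(\underline{x},z')\ne0\}$. Then $$\big\|(g_z*K)\,(g_{z'}*K)\big\|_{L^2(F^3)}^2 \lesssim |F|^{-1}|G_z|\,|G_{z'}| + |F|^{-2}\,\mathcal{T}(G_z,G_{z'}).$$
   Context: $e:(F,+)\to\mathbb{C}^\times$ is a fixed nontrivial additive character; $x\cdot y=\sum_i x_iy_i$ on $F^d$; points of $F^3$ are $x=(\underline{x},x_3)$. $P=\{(\underline{x},\underline{x}\cdot\underline{x}):\underline{x}\in F^2\}$. $F^3$ carries counting measure, $\|h\|_{L^2(F^3)}=(\sum_x|h(x)|^2)^{1/2}$, $(h_1*h_2)(x)=\sum_{y}h_1(y)h_2(x-y)$. $(d\sigma)^{\vee}(x)=|F|^{-2}\sum_{\xi\in P}e(x\cdot\xi)$, $\delta$ is the indicator of $0\in F^3$, $K:=(d\sigma)^{\vee}-\delta$. ''$h\sim1$ on its support'' means $\tfrac12\le|h|\le2$ wherever $h\neq0$. A quadruple $(x_1,x_2,x_3,x_4)$ of points of $F^2$ is a trapezoid if there exists $\lambda\in F$ with $x_1-x_2=\lambda(x_3-x_4)$. For $A,B\subseteq F^2$, $\mathcal{T}(A,B)$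 is the number of trapezoids $(x_1,x_2,x_3,x_4)$ with $x_1,x_2\in A$ and $x_3,x_4\in B$. $X\lesssim Y$ means $X\le CY$ with $C$ an absolute constant. *)

(* Defs.v *)
From HB Require Import structures.
From mathcomp Require Import all_boot all_order all_algebra all_field.
Set Implicit Arguments. Unset Strict Implicit. Unset Printing Implicit Defensive.
Import Order.TTheory GRing.Theory Num.Theory.
Local Open Scope ring_scope.

(* Complex numbers are modelled by algC (algebraic complex numbers): all values
   involved (character values, |F|^-2, sums) are algebraic. *)

Notation pt F := (((F * F) * F)%type).

Section Defs.
Variable F : finFieldType.

Definition dot2 (u v : F * F) : F := u.1 * v.1 + u.2 * v.2.
Definition dot3 (x y : pt F) : F := dot2 x.1 y.1 + x.2 * y.2.
Definition sub3 (x y : pt F) : pt F :=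
  ((x.1.1 - y.1.1, x.1.2 - y.1.2), x.2 - y.2).

Definition is_nontriv_add_char (e : F -> algC) : Prop :=
  (forall x y, e (x + y) = e x * e y) /\ (exists x, e x != 1).

Definition dsigma_check (e : F -> algC) (x : pt F) : algC :=
  (#|F|%:R)^-2 * \sum_(u : F * F) e (dot3 x (u, dot2 u u)).

Definition delta0 (x : pt F) : algC := if x == ((0, 0), 0) then 1 else 0.

Definition Kker (e : F -> algC) (x : pt F) : algC := dsigma_check e x - delta0 x.

Definition conv (h1 h2 : pt F -> algC) (x : pt F) : algC :=
  \sum_(y : pt F) h1 y * h2 (sub3 x y).

Definition sim1_on_support (h : pt F -> algC) : Prop :=
  forall x, h x != 0 -> 2^-1 <= `|h x| <= 2.

Definition supported_on_plane (h : pt F -> algC) (z : F) : Prop :=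
  forall x, h x != 0 -> x.2 = z.

Definition slice (h : pt F -> algC) (z : F) : {set F * F} :=
  [set u : F * F | h (u, z) != 0].

Definition trapezoid (x1 x2 x3 x4 : F * F) : bool :=
  [exists l : F, (x1.1 - x2.1 == l * (x3.1 - x4.1)) &&
                 (x1.2 - x2.2 == l * (x3.2 - x4.2))].

Definition trap_count (A B : {set F * F}) : nat :=
  #|[set q : ((F * F) * (F * F)) * ((F * F) * (F * F)) |
     [&& q.1.1 \in A, q.1.2 \in A, q.2.1 \in B, q.2.2 \in B &
         trapezoid q.1.1 q.1.2 q.2.1 q.2.2]]|.

Definition L2sq (h : pt F -> algC) : algC := \sum_(x : pt F) `|h x| ^+ 2.

End Defs.

(* Main.v *)
Require Import Defs.
From HB Require Import structures.
From mathcomp Require Import all_boot all_order all_algebra all_field.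
From mathcomp Require Import ring lra.
Set Implicit Arguments. Unset Strict Implicit. Unset Printing Implicit Defensive.
Import Order.TTheory GRing.Theory Num.Theory.
Local Open Scope ring_scope.

Lemma sum_pair (T1 T2 : finType) (f : T1 * T2 -> algC) :
  \sum_p f p = \sum_i \sum_j f (i, j).
Proof. by rewrite pair_big; apply: eq_bigr => -[]. Qed.

Section Char.
Variable F : finFieldType.
Variable e : F -> algC.
Hypothesis eD : forall x y, e (x + y) = e x * e y.
Hypothesis e0 : e 0 = 1.
Hypothesis ent : exists x, e x != 1.

Let q : algC := #|F|%:R.

Lemma eMn x n : e (x *+ n) = e x ^+ n.
Proof. by elim: n => [|n IH]; rewrite ?mulr0n ?e0 ?expr0 // mulrS eD IH exprS. Qed.

Lemma e_norm x : `|e x| = 1.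
Proof.
case: (finPcharP F) => p pp pc.
have : e x ^+ p = 1 by rewrite -eMn (mulrn_pchar pc) e0.
move=> /(congr1 (fun y => `|y|)); rewrite normrX normr1 => /eqP.
by rewrite pexpr_eq1 ?prime_gt0 // => /eqP.
Qed.

Lemma e_neq0 x : e x != 0.
Proof. by rewrite -normr_eq0 e_norm oner_eq0. Qed.

Lemma eN x : e (- x) = (e x)^*.
Proof.
apply: (mulfI (e_neq0 x)).
by rewrite -eD subrr e0 -normCK e_norm expr1n.
Qed.

Lemma eB x y : e (x - y) = e x * (e y)^*.
Proof. by rewrite eD eN. Qed.

Lemma q_gt0 : 0 < q.
Proof. by rewrite ltr0n; apply/card_gt0P; exists 0. Qed.

Lemma orth1 c : \sum_(a : F) e (c * a) = if c == 0 then q else 0.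
Proof.
case: eqP => [->|/eqP hc].
  by under eq_bigr do rewrite mul0r e0; rewrite sumr_const.
rewrite (reindex_inj (mulfI (invr_neq0 hc))) /=.
under eq_bigr do rewrite mulrA mulfV // mul1r.
case: ent => x0 hx0.
have : e x0 * \sum_a e a = \sum_a e a.
  rewrite mulr_sumr (reindex_inj (addrI (- x0))) /=.
  by apply: eq_bigr => a _; rewrite -eD addrA subrr add0r.
move/eqP; rewrite -subr_eq0 -{2}[\sum_a e a]mul1r -mulrBl mulf_eq0 subr_eq0.
by rewrite (negbTE hx0) /= => /eqP.
Qed.

Lemma orth2 (c : F * F) :
  \sum_(v : F * F) e (dot2 c v) = if c == (0, 0) then q ^+ 2 else 0.
Proof.
rewrite sum_pair.
under eq_bigr do under eq_bigr do rewrite /dot2 /= eD.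
under eq_bigr do rewrite -mulr_sumr.
rewrite -mulr_suml orth1 orth1.
case: c => c1 c2 /=; rewrite xpair_eqE.
by case: eqP; case: eqP; rewrite ?mulr0 ?mul0r.
Qed.

End Char.

Section Char2.
Variable F : finFieldType.
Variable e : F -> algC.
Hypothesis eD : forall x y, e (x + y) = e x * e y.
Hypothesis e0 : e 0 = 1.
Hypothesis ent : exists x, e x != 1.
Hypothesis h2 : (2 : F) != 0.

Let q : algC := #|F|%:R.

Definition S0 (t : F) := \sum_(u : F * F) e (t * dot2 u u).

Lemma h4 : (4 : F) != 0.
Proof. by rewrite (_ : 4 = 2 * 2 :> F) ?mulf_neq0 //; ring. Qed.

Lemma complete_sq t v : t != 0 ->
  \sum_(u : F * F) e (dot2 v u + t * dot2 u u) =
  e (- ((4 * t)^-1 * dot2 v v)) * S0 t.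
Proof.
move=> ht.
pose d := (2 * (4 * t)^-1 * v.1, 2 * (4 * t)^-1 * v.2).
have hinj : injective (fun u : F * F => (u.1 - d.1, u.2 - d.2)).
  by move=> [a b] [c d'] /= [] /addIr -> /addIr ->.
rewrite (reindex_inj hinj) /S0 mulr_sumr; apply: eq_bigr => u _.
rewrite -eD; congr e; rewrite /dot2 /d /=.
field; by rewrite ht h4.
Qed.

Lemma S0_norm t : t != 0 -> `|S0 t| ^+ 2 = q ^+ 2.
Proof.
move=> ht.
rewrite normCK /S0 rmorph_sum mulr_suml.
under eq_bigr do rewrite mulr_sumr.
rewrite exchange_big /=.
have hinj : forall v : F * F, injective (fun h : F * F => (h.1 + v.1, h.2 + v.2)).
  by move=> v [a b] [c d] /= [] /addIr -> /addIr ->.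
under eq_bigr => v _ do rewrite (reindex_inj (hinj v)).
have E : forall v h : F * F, e (t * dot2 (h.1 + v.1, h.2 + v.2) (h.1 + v.1, h.2 + v.2))
     * (e (t * dot2 v v))^* = e (t * dot2 h h) * e (dot2 (2 * t * h.1, 2 * t * h.2) v).
  by move=> v h; rewrite -(eB eD e0) -eD; congr e; rewrite /dot2 /=; ring.
under eq_bigr do under eq_bigr do rewrite E.
rewrite exchange_big /=.
under eq_bigr do rewrite -mulr_sumr (orth2 eD e0 ent).
rewrite (bigD1 (0, 0)) //= big1 ?addr0.
  rewrite !mulr0 eqxx /dot2 /= (_ : t * _ = 0) ?e0 ?mul1r //; ring.
move=> [a b] /=; rewrite xpair_eqE negb_and => hab.
rewrite xpair_eqE !mulf_eq0 (negbTE h2) (negbTE ht) /=.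
by case/orP: hab => /negbTE ->; rewrite ?andbF mulr0.
Qed.

End Char2.

Lemma conv_plane (F : finFieldType) (g h : pt F -> algC) z x :
  supported_on_plane g z ->
  conv g h x = \sum_(a : F * F) g (a, z) * h ((x.1.1 - a.1, x.1.2 - a.2), x.2 - z).
Proof.
move=> Hs; rewrite /conv sum_pair; apply: eq_bigr => a _.
rewrite (bigD1 z) //= big1 ?addr0 // => y3 hy.
have -> : g (a, y3) = 0 by apply/eqP; apply: contraR hy => /Hs /= ->.
by rewrite mul0r.
Qed.

Section Kern.
Variable F : finFieldType.
Variable e : F -> algC.
Hypothesis eD : forall x y, e (x + y) = e x * e y.
Hypothesis e0 : e 0 = 1.
Hypothesis ent : exists x, e x != 1.
Hypothesis h2 : (2 : F) != 0.

Let q : algC := #|F|%:R.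

Lemma K_plane v : Kker e (v, 0) = 0.
Proof.
rewrite /Kker /dsigma_check /delta0.
under eq_bigr do rewrite /dot3 /= mul0r addr0.
rewrite (orth2 eD e0 ent) /= xpair_eqE eqxx andbT.
case: eqP => _; last by rewrite mulr0 subrr.
by rewrite mulVf ?subrr // expf_neq0 // lt0r_neq0 // (q_gt0).
Qed.

Lemma K_off v t : t != 0 ->
  Kker e (v, t) = q ^- 2 * (e (- ((4 * t)^-1 * dot2 v v)) * S0 e t).
Proof.
move=> ht; rewrite /Kker /dsigma_check /delta0 /= xpair_eqE (negbTE ht) andbF subr0.
by under eq_bigr do rewrite /dot3 /=; rewrite complete_sq.
Qed.

Lemma conv_off g z x : supported_on_plane g z -> x.2 != z ->
  conv g (Kker e) x = q ^- 2 * S0 e (x.2 - z) *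
    \sum_(a : F * F) g (a, z) *
      e (- ((4 * (x.2 - z))^-1 * dot2 (x.1.1 - a.1, x.1.2 - a.2) (x.1.1 - a.1, x.1.2 - a.2))).
Proof.
move=> Hs hx; rewrite (conv_plane _ _ Hs) mulr_sumr; apply: eq_bigr => a _.
rewrite K_off ?subr_eq0 //; rewrite mulrC -!mulrA; congr (_ * _).
by rewrite mulrC -mulrA.
Qed.

Lemma conv_on g z x : supported_on_plane g z -> x.2 = z -> conv g (Kker e) x = 0.
Proof.
move=> Hs hx; rewrite (conv_plane _ _ Hs); apply: big1 => a _.
by rewrite hx subrr K_plane mulr0.
Qed.

End Kern.

Lemma conv_zero (F : finFieldType) (e : F -> algC) g z x :
  (forall y, e y = 0) -> supported_on_plane g z -> x.2 != z -> conv g (Kker e) x = 0.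
Proof.
move=> ez Hs hx; rewrite (conv_plane _ _ Hs); apply: big1 => a _.
rewrite /Kker /dsigma_check /delta0 /= xpair_eqE.
rewrite (negbTE (_ : x.2 - z != 0)) ?subr_eq0 // andbF subr0.
by rewrite big1 ?mulr0 // => u _; rewrite ez.
Qed.

Section Expand.
Variable F : finFieldType.
Variable e : F -> algC.
Hypothesis eD : forall x y, e (x + y) = e x * e y.
Hypothesis e0 : e 0 = 1.

Lemma expand2 (X P : finType) (al : P -> algC) (ps : P -> X -> F) :
  \sum_x `|\sum_p al p * e (ps p x)| ^+ 2 =
  \sum_p1 \sum_p2 (al p1 * (al p2)^* * \sum_x e (ps p1 x - ps p2 x)).
Proof.
under eq_bigr do rewrite normCK rmorph_sum mulr_suml.
under eq_bigr do under eq_bigr do rewrite mulr_sumr.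
rewrite exchange_big /=; apply: eq_bigr => p1 _.
rewrite exchange_big /=; apply: eq_bigr => p2 _.
rewrite mulr_sumr; apply: eq_bigr => x _.
rewrite (eB eD e0) rmorphM /=; ring.
Qed.
End Expand.

Section PerW.
Variable F : finFieldType.
Variable e : F -> algC.
Hypothesis eD : forall x y, e (x + y) = e x * e y.
Hypothesis e0 : e 0 = 1.
Hypothesis ent : exists x, e x != 1.
Hypothesis h2 : (2 : F) != 0.
Variables (z z' : F) (gz gz' : pt F -> algC).
Hypothesis Hs : supported_on_plane gz z.
Hypothesis Hs' : supported_on_plane gz' z'.

Local Notation q := (#|F|%:R : algC).

Definition sub2 (u v : F * F) := (u.1 - v.1, u.2 - v.2).
Definition psi (w : F) (p : (F * F) * (F * F)) (x : F * F) : F :=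
  - ((4 * (w - z))^-1 * dot2 (sub2 x p.1) (sub2 x p.1))
  + - ((4 * (w - z'))^-1 * dot2 (sub2 x p.2) (sub2 x p.2)).
Definition al (p : (F * F) * (F * F)) := gz (p.1, z) * gz' (p.2, z').
Definition releq (w : F) (p1 p2 : (F * F) * (F * F)) : bool :=
  ((w - z') * (p1.1.1 - p2.1.1) + (w - z) * (p1.2.1 - p2.2.1) == 0) &&
  ((w - z') * (p1.1.2 - p2.1.2) + (w - z) * (p1.2.2 - p2.2.2) == 0).

Lemma AB_formula w xb : w != z -> w != z' ->
  conv gz (Kker e) (xb, w) * conv gz' (Kker e) (xb, w) =
  q ^- 2 * S0 e (w - z) * (q ^- 2 * S0 e (w - z')) * \sum_p al p * e (psi w p xb).
Proof.
move=> hz hz'.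
rewrite (conv_off eD h2 Hs) // (conv_off eD h2 Hs') //=.
rewrite mulrACA; congr (_ * _).
rewrite mulr_suml [RHS]sum_pair; apply: eq_bigr => a _.
rewrite mulr_sumr; apply: eq_bigr => b _.
rewrite /al /psi eD /sub2 /=; ring.
Qed.


Lemma q_neq0 : q != 0.
Proof. by rewrite lt0r_neq0 // (q_gt0). Qed.

Lemma per_w w : w != z -> w != z' ->
  \sum_xb `|conv gz (Kker e) (xb, w) * conv gz' (Kker e) (xb, w)| ^+ 2
  <= q ^- 2 * \sum_p1 \sum_p2 `|al p1| * `|al p2| * (releq w p1 p2)%:R.
Proof.
move=> hz hz'.
have ht : w - z != 0 by rewrite subr_eq0.
have hs : w - z' != 0 by rewrite subr_eq0.
have qn := q_neq0.
have qp : 0 <= q ^- 2 by rewrite invr_ge0 exprn_ge0 // ltW // (q_gt0).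
under eq_bigr => xb _ do rewrite AB_formula // !normrM !exprMn
  (S0_norm eD e0 ent h2 ht) (S0_norm eD e0 ent h2 hs) (ger0_norm qp).
rewrite (eq_bigr (fun xb => (q ^- 2) ^+ 2 * `|\sum_p al p * e (psi w p xb)| ^+ 2)); last first.
  by move=> xb _; field.
rewrite -mulr_sumr.
set rt := (4 * (w - z))^-1; set rs := (4 * (w - z'))^-1.
pose cc (p1 p2 : (F * F) * (F * F)) :=
  (2 * rt * (p1.1.1 - p2.1.1) + 2 * rs * (p1.2.1 - p2.2.1),
   2 * rt * (p1.1.2 - p2.1.2) + 2 * rs * (p1.2.2 - p2.2.2)).
pose kk (p1 p2 : (F * F) * (F * F)) :=
  - (rt * (dot2 p1.1 p1.1 - dot2 p2.1 p2.1)) - rs * (dot2 p1.2 p1.2 - dot2 p2.2 p2.2).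
have Hin : forall p1 p2, \sum_x e (psi w p1 x - psi w p2 x) =
    e (kk p1 p2) * (if cc p1 p2 == (0, 0) then q ^+ 2 else 0).
  move=> p1 p2.
  have Hid : forall x, psi w p1 x - psi w p2 x = kk p1 p2 + dot2 (cc p1 p2) x.
    by move=> x; rewrite /psi /kk /cc /sub2 /dot2 /rt /rs /=; ring.
  by under eq_bigr => x _ do rewrite Hid eD; rewrite -mulr_sumr (orth2 eD e0 ent).
have Hrel : forall p1 p2, cc p1 p2 == (0, 0) -> releq w p1 p2.
  move=> p1 p2; rewrite xpair_eqE => /andP [/eqP c1 /eqP c2].
  have h4 := h4 h2.
  apply/andP; split; apply/eqP.
    have -> : (w - z') * (p1.1.1 - p2.1.1) + (w - z) * (p1.2.1 - p2.2.1) =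
      (cc p1 p2).1 * (2 * (w - z) * (w - z')).
      rewrite /cc /rt /rs /=; field; by rewrite ht hs h4.
    by rewrite /cc /= c1 mul0r.
  have -> : (w - z') * (p1.1.2 - p2.1.2) + (w - z) * (p1.2.2 - p2.2.2) =
    (cc p1 p2).2 * (2 * (w - z) * (w - z')).
    rewrite /cc /rt /rs /=; field; by rewrite ht hs h4.
  by rewrite /cc /= c2 mul0r.
have -> : forall X : algC, q ^- 2 * X = (q ^- 2) ^+ 2 * (q ^+ 2 * X).
  by move=> X; field.
apply: ler_wpM2l; first by rewrite exprn_ge0.
set S := (X in X <= _).
have -> : S = `|S| by rewrite ger0_norm // /S; apply: sumr_ge0 => x _; rewrite exprn_ge0.
rewrite /S.
rewrite (expand2 eD e0) mulr_sumr.
apply: le_trans (ler_norm_sum _ _ _) _; apply: ler_sum => p1 _.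
rewrite mulr_sumr.
apply: le_trans (ler_norm_sum _ _ _) _; apply: ler_sum => p2 _.
set a1 := al p1; set a2 := al p2.
rewrite Hin !normrM norm_conjC (e_norm eD e0) mul1r.
case: ifP => hc.
  rewrite (Hrel _ _ hc) mulr1 [`|_ ^+ 2|]ger0_norm; last by rewrite exprn_ge0 // ltW // (q_gt0).
  by rewrite le_eqVlt; apply/orP; left; apply/eqP; rewrite /a2 /al normrM; ring.
rewrite normr0 mulr0 !mulr_ge0 ?normr_ge0 ?ler0n ?exprn_ge0 // ltW // (q_gt0).
Qed.

End PerW.

Lemma scal_uniq (F : fieldType) (d e w1 w2 z z' : F) : z != z' ->
  (w1 - z') * d + (w1 - z) * e = 0 -> (w2 - z') * d + (w2 - z) * e = 0 ->
  w1 = w2 \/ (d = 0 /\ e = 0).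
Proof.
move=> hz H1 H2.
have H3 : (w1 - w2) * (d + e) = 0.
  by rewrite -[RHS](subrr 0) -{1}H1 -H2; ring.
move: H3 => /eqP; rewrite mulf_eq0 subr_eq0 => /orP [/eqP ->|]; first by left.
rewrite addr_eq0 => /eqP he; right.
have : (z - z') * e = 0 by rewrite -[0]oppr0 -H1 he; ring.
move/eqP; rewrite mulf_eq0 subr_eq0 (negbTE hz) /= => /eqP hd.
by split => //; rewrite he hd oppr0.
Qed.

Section Count.
Variable F : finFieldType.
Variables z z' : F.
Hypothesis hz : z != z'.

Definition relf (w : F) (p1 p2 : (F * F) * (F * F)) : bool :=
  [&& w != z, w != z',
  ((w - z') * (p1.1.1 - p2.1.1) + (w - z) * (p1.2.1 - p2.2.1) == 0) &
  ((w - z') * (p1.1.2 - p2.1.2) + (w - z) * (p1.2.2 - p2.2.2) == 0)].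

Lemma relf_trap w p1 p2 : relf w p1 p2 -> trapezoid p1.1 p2.1 p1.2 p2.2.
Proof.
case/and4P => h1 h2 /eqP e1 /eqP e2.
have hs : w - z' != 0 by rewrite subr_eq0.
apply/existsP; exists (- (w - z) / (w - z')).
apply/andP; split; rewrite -subr_eq0; apply/eqP.
  rewrite (_ : _ - _ = ((w - z') * (p1.1.1 - p2.1.1) + (w - z) * (p1.2.1 - p2.2.1)) / (w - z')).
    by rewrite e1 mul0r.
  by field.
rewrite (_ : _ - _ = ((w - z') * (p1.1.2 - p2.1.2) + (w - z) * (p1.2.2 - p2.2.2)) / (w - z')).
  by rewrite e2 mul0r.
by field.
Qed.

Lemma relf_uniq w1 w2 p1 p2 : p1 != p2 -> relf w1 p1 p2 -> relf w2 p1 p2 -> w1 = w2.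
Proof.
case: p1 => [[x1 x2] [x3 x4]]; case: p2 => [[y1 y2] [y3 y4]] /=.
move=> hne /and4P [_ _ /eqP a1 /eqP a2] /and4P [_ _ /eqP b1 /eqP b2].
move: a1 a2 b1 b2 => /= a1 a2 b1 b2.
case: (scal_uniq hz a1 b1) => // -[/eqP d1 /eqP e1].
case: (scal_uniq hz a2 b2) => // -[/eqP d2 /eqP e2].
move: d1 e1 d2 e2; rewrite !subr_eq0 => /eqP d1 /eqP e1 /eqP d2 /eqP e2.
by move: hne; rewrite d1 e1 d2 e2 eqxx.
Qed.

Lemma sum_bool (T : finType) (P : pred T) : (\sum_(x : T) P x = #|P|)%N.
Proof.
by rewrite -sum1_card [RHS]big_mkcond /=; apply: eq_bigr => x _; case: ifP; rewrite unfold_in /= => ->.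
Qed.

Lemma count_w p1 p2 :
  (\sum_(w : F) relf w p1 p2 <= #|F| * (p1 == p2) + trapezoid p1.1 p2.1 p1.2 p2.2)%N.
Proof.
case: (eqVneq p1 p2) => [<-|hne].
  rewrite muln1; apply: leq_trans (leq_addr _ _).
  by rewrite sum_bool max_card.
rewrite muln0 add0n.
case htr : (trapezoid _ _ _ _).
  rewrite sum_bool; apply/card_le1_eqP => w1 w2 h1 h2.
  move: h1 h2; rewrite !unfold_in /= => h1 h2; exact: relf_uniq hne h2 h1.
rewrite /= leqn0 sum_bool; apply/eqP/eq_card0 => w; apply/negP => /= /relf_trap.
by rewrite htr.
Qed.

End Count.

Lemma g_bound (F : finFieldType) (g : pt F -> algC) z a :
  sim1_on_support g -> `|g (a, z)| <= 2 * (a \in slice g z)%:R.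
Proof.
move=> S; rewrite /slice inE.
case: (eqVneq (g (a, z)) 0) => [->|h]; first by rewrite normr0 /= mulr0.
by rewrite /= mulr1; case/andP: (S _ h).
Qed.

Lemma sum_pairN (T1 T2 : finType) (f : T1 * T2 -> nat) :
  (\sum_p f p = \sum_i \sum_j f (i, j))%N.
Proof. by rewrite pair_big; apply: eq_bigr => -[]. Qed.

Lemma sum_count (F : finFieldType) (A B : {set F * F}) :
  (\sum_(p1 : (F * F) * (F * F)) \sum_(p2 : (F * F) * (F * F))
     ((p1.1 \in A) && (p1.2 \in B)) * ((p2.1 \in A) && (p2.2 \in B)) *
     (#|F| * (p1 == p2) + trapezoid p1.1 p2.1 p1.2 p2.2))%N
  = (#|F| * (#|A| * #|B|) + trap_count A B)%N.
Proof.
under eq_bigr do under eq_bigr do rewrite mulnDr.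
under eq_bigr do rewrite big_split /=.
rewrite big_split /=; congr (_ + _)%N.
  rewrite -cardsX (_ : #|setX A B| = \sum_p (p \in setX A B))%N; last first.
    by rewrite -sum1_card [LHS]big_mkcond /=; apply: eq_bigr => x _; case: ifP.
  rewrite big_distrr /=; apply: eq_bigr => p1 _.
  rewrite (bigD1 p1) //= big1 ?addn0.
    by rewrite eqxx muln1 mulnb andbb inE mulnC.
  by move=> p2 /negbTE; rewrite eq_sym => ->; rewrite !muln0.
rewrite /trap_count cardsE -sum_bool.
pose h (p : ((F * F) * (F * F)) * ((F * F) * (F * F))) := ((p.1.1, p.2.1), (p.1.2, p.2.2)).
have hK : cancel h h by case=> [[a b] [c d]].
rewrite (reindex_inj (can_inj hK)) [RHS]sum_pairN; apply: eq_bigr => p1 _; apply: eq_bigr => p2 _.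
rewrite /= !mulnb.
by case: (p1.1 \in A); case: (p1.2 \in B); case: (p2.1 \in A); case: (p2.2 \in B).
Qed.

Theorem proposition3p1 :
  exists C : algC, 0 <= C /\
  forall (F : finFieldType) (e : F -> algC),
    ~~ (2 \in [pchar F]) ->
    ~ (exists y : F, y * y = -1) ->
    is_nontriv_add_char e ->
    forall (z z' : F) (gz gz' : pt F -> algC),
      z != z' ->
      supported_on_plane gz z -> supported_on_plane gz' z' ->
      sim1_on_support gz -> sim1_on_support gz' ->
      L2sq (fun x => conv gz (Kker e) x * conv gz' (Kker e) x)
      <= C * ((#|F|%:R)^-1 * #|slice gz z|%:R * #|slice gz' z'|%:R
              + (#|F|%:R)^-2 * (trap_count (slice gz z) (slice gz' z'))%:R).
Proof.
exists 16; split; first by rewrite ler0n.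
move=> F e h2c _ [eD ent] z z' gz gz' hz Hs Hs' S1 S1'.
have qp : 0 < (#|F|%:R : algC) := q_gt0 F.
have qn : (#|F|%:R : algC) != 0 by rewrite lt0r_neq0.
have RHS0 : 0 <= 16 * ((#|F|%:R)^-1 * #|slice gz z|%:R * #|slice gz' z'|%:R
              + (#|F|%:R)^-2 * (trap_count (slice gz z) (slice gz' z'))%:R :> algC).
  by rewrite mulr_ge0 ?ler0n // addr_ge0 // !mulr_ge0 ?ler0n ?invr_ge0 ?exprn_ge0 // ltW.
have : e 0 * (e 0 - 1) = 0 by rewrite mulrBr mulr1 -eD addr0 subrr.
move/eqP; rewrite mulf_eq0 subr_eq0 => /orP [/eqP ez0 | /eqP e0].
  have ez : forall y, e y = 0 by move=> y; rewrite -[y]addr0 eD ez0 mulr0.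
  rewrite /L2sq big1 // => x _.
  case: (eqVneq x.2 z) => hx.
    rewrite (conv_zero (g := gz') ez Hs') ?mulr0 ?normr0 ?expr0n //.
    by rewrite hx.
  by rewrite (conv_zero ez Hs hx) mul0r normr0 expr0n.
have h2 : (2 : F) != 0.
  by apply: contra h2c => h; rewrite inE /= h.
set G := slice gz z; set G' := slice gz' z'.
pose f (p1 p2 : (F * F) * (F * F)) := `|al z z' gz gz' p1| * `|al z z' gz gz' p2|.
have fge0 : forall p1 p2, 0 <= f p1 p2 by move=> p1 p2; rewrite mulr_ge0.
have Rge0 : forall w, 0 <= (#|F|%:R)^-2 * \sum_p1 \sum_p2 f p1 p2 * (relf z z' w p1 p2)%:R.
  move=> w; apply: mulr_ge0; first by rewrite invr_ge0 exprn_ge0 // ltW.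
  by apply: sumr_ge0 => p1 _; apply: sumr_ge0 => p2 _; rewrite mulr_ge0 ?ler0n.
have Hw : forall w, \sum_xb `|conv gz (Kker e) (xb, w) * conv gz' (Kker e) (xb, w)| ^+ 2
   <= (#|F|%:R)^-2 * \sum_p1 \sum_p2 f p1 p2 * (relf z z' w p1 p2)%:R.
  move=> w.
  case: (eqVneq w z) => [->|hw].
    rewrite big1 ?Rge0 // => xb _.
    by rewrite (conv_on eD e0 ent Hs) ?mul0r ?normr0 ?expr0n.
  case: (eqVneq w z') => [->|hw'].
    rewrite big1 ?Rge0 // => xb _.
    by rewrite [conv gz' _ _](conv_on eD e0 ent Hs') ?mulr0 ?normr0 ?expr0n.
  rewrite /relf hw hw' /=.
  exact: (per_w eD e0 ent h2 Hs Hs' hw hw').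
rewrite /L2sq sum_pair exchange_big /=.
apply: le_trans (ler_sum _ (fun w _ => Hw w)) _.
rewrite -mulr_sumr.
have E1 : \sum_w \sum_p1 \sum_p2 f p1 p2 * (relf z z' w p1 p2)%:R =
    \sum_p1 \sum_p2 f p1 p2 * (\sum_w relf z z' w p1 p2)%:R.
  rewrite exchange_big; apply: eq_bigr => p1 _.
  rewrite exchange_big; apply: eq_bigr => p2 _.
  by rewrite natr_sum mulr_sumr.
rewrite E1.
apply: le_trans (_ : _ <= (#|F|%:R)^-2 * \sum_p1 \sum_p2 16 *
   (((p1.1 \in G) && (p1.2 \in G')) * ((p2.1 \in G) && (p2.2 \in G')) *
     (#|F| * (p1 == p2) + trapezoid p1.1 p2.1 p1.2 p2.2))%:R) _.
  apply: ler_wpM2l; first by rewrite invr_ge0 exprn_ge0 ?ltW.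
  apply: ler_sum => p1 _; apply: ler_sum => p2 _.
  have ab : forall p, `|al z z' gz gz' p| <= 4 * ((p.1 \in G) && (p.2 \in G'))%:R.
    move=> p; rewrite /al normrM.
    apply: le_trans (ler_pM _ _ (g_bound z p.1 S1) (g_bound z' p.2 S1')) _ => //.
    by rewrite le_eqVlt; apply/orP; left; apply/eqP; rewrite -mulnb natrM; ring.
  have cw : ((\sum_w relf z z' w p1 p2)%:R <= (#|F| * (p1 == p2) + trapezoid p1.1 p2.1 p1.2 p2.2)%:R :> algC).
    by rewrite ler_nat (count_w hz).
  apply: le_trans (ler_pM (fge0 p1 p2) _ (ler_pM _ _ (ab p1) (ab p2)) cw) _ => //.
  by rewrite le_eqVlt; apply/orP; left; apply/eqP; rewrite !natrM; ring.
under eq_bigr do rewrite -mulr_sumr.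
rewrite -mulr_sumr.
under eq_bigr do rewrite -natr_sum.
rewrite -natr_sum sum_count natrD !natrM.
by rewrite le_eqVlt; apply/orP; left; apply/eqP; field.
Qed.
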